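(* Let $L_{n,j}$, $D_{n,j}$, $U_{n,j}$ denote the total number of levels, descents, and ascents, respectively, over all members of $I_{n,j}$. Then $$\sum_{n\ge1}\sum_{j=1}^nL_{n,j}y^j\frac{x^n}{n!}=xy+\frac{2(xy-y-1)\ln(1-xy)-2y(x-2)\ln(1-x)-y\left(\ln^2(1-xy)-\ln^2(1-x)\right)}{2(1-y)},$$ $$\sum_{n\ge1}\sum_{j=1}^nD_{n,j}y^j\frac{x^n}{n!}=\frac{xy}{2(1-y)}\left(\frac{3x-2}{1-x}-\frac{xy^2}{1-xy}\right)+\frac{(1-xy)\ln(1-xy)-y(2-x-y)\ln(1-x)}{(1-y)^2}+\frac{y\left(\ln^2(1-xy)-\ln^2(1-x)\right)}{2(1-y)},$$ $$\sum_{n\ge1}\sum_{j=1}^nU_{n,j}y^j\frac{x^n}{n!}=\frac{xy}{2(1-y)}\left(\frac{2-x}{1-x}-\frac{xy^2}{1-xy}\right)+\frac{y(1-xy)}{(1-y)^2}\ln\left(\frac{1-x}{1-xy}\right).$$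
   Context: An inversion sequence of length $n$ is a sequence $\rho=\rho_1\cdots\rho_n$ of integers with $1\le \rho_i\le i$ for all $i$; $I_{n,j}$ is the set of those of length $n$ with last letter $j$. A level, descent, or ascent of $\rho$ is an index $i\in[n-1]$ with $\rho_i=\rho_{i+1}$, $\rho_i>\rho_{i+1}$, or $\rho_i<\rho_{i+1}$, respectively. *)

(* Defs.v *)
From Stdlib Require Import Reals.
From mathcomp Require Import all_boot.
Set Implicit Arguments. Unset Strict Implicit. Unset Printing Implicit Defensive.

(* A word of length n with letters in {0,..,n}; position i (0-based) holds rho_(i+1). *)
Definition word (n : nat) := n.-tuple 'I_n.+1.

Definition is_invseq n (r : word n) : bool :=
  [forall i : 'I_n, (0 < tnth r i) && (tnth r i <= i.+1)].

Definition letters n (r : word n) : seq nat := map val (tval r).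

Definition last_letter n (r : word n) : nat := last 0 (letters r).

(* numbers of levels / descents / ascents: indices i in [n-1] (here 0-based
   positions 0..n-2) comparing rho_i and rho_(i+1) *)
Definition count_pos (P : nat -> nat -> bool) (s : seq nat) : nat :=
  count (fun i => P (nth 0 s i) (nth 0 s i.+1)) (iota 0 (size s).-1).
Definition nlevels (s : seq nat) := count_pos (fun a b => a == b) s.
Definition ndescents (s : seq nat) := count_pos (fun a b => b < a) s.
Definition nascents (s : seq nat) := count_pos (fun a b => a < b) s.

Definition total (stat : seq nat -> nat) (n j : nat) : nat :=
  \sum_(r : word n | is_invseq r && (last_letter r == j)) stat (letters r).

Definition Ltot := total nlevels.
Definition Dtot := total ndescents.
Definition Utot := total nascents.

Local Open Scope R_scope.

Definition egf_term (T : nat -> nat -> nat) (x y : R) (n : nat) : R :=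
  match n with
  | O => 0
  | S m => sum_f_R0 (fun k => INR (T n (S k)) * y ^ (S k)) m * x ^ n / INR (n`!)
  end.

(* Main.v *)
From Coquelicot Require Import Coquelicot.
From Stdlib Require Import Reals Lra Lia.
Open Scope R_scope.
Notation iser a l := (@is_series R_AbsRing R_NormedModule a l).

Lemma ser_plus (a b : nat -> R) (la lb : R) : iser a la -> iser b lb ->
  iser (fun n => a n + b n) (la + lb).
Proof. intros; now apply (is_series_plus a b). Qed.
Lemma ser_scal (c : R) (a : nat -> R) (l : R) : iser a l -> iser (fun n => c * a n) (c * l).
Proof. intros; now apply (is_series_scal c a). Qed.
Lemma ser_ext (a b : nat -> R) (l : R) : (forall n, a n = b n) -> iser a l -> iser b l.
Proof. intros; now apply (is_series_ext a b). Qed.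
Lemma ser_shift1 (a : nat -> R) (l : R) : iser a l -> iser (fun n => a (S n)) (l - a O).
Proof. intros H. apply (is_series_incr_1 (K:=R_AbsRing) (V:=R_NormedModule)).
  match goal with |- is_series _ ?L => replace L with l end. exact H.
  unfold plus; simpl. ring. Qed.

Definition lna (n : nat) : R := match n with O => 0 | S k => / INR (S k) end.

Lemma lna_rad w : Rabs w < 1 -> Rbar_lt (Rabs w) (CV_radius lna).
Proof.
  intros Hw.
  assert (H1 : Rbar_le 1 (CV_radius lna)).
  { destruct (CV_radius_bounded lna) as [Hub _]. apply Hub.
    exists 1. intros n. rewrite pow1, Rmult_1_r. destruct n as [|k]. simpl lna.
    rewrite Rabs_R0; lra. change (lna (S k)) with (/ INR (S k)).
    rewrite Rabs_right.
    - assert (h : 1 <= INR (S k)) by (apply (le_INR 1); lia).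
      apply Rle_trans with (/ 1). apply Rinv_le_contravar. lra. exact h. rewrite Rinv_1; lra.
    - apply Rle_ge, Rlt_le, Rinv_0_lt_compat. apply lt_0_INR; lia. }
  destruct (CV_radius lna) as [r| |]; simpl in *; auto; lra.
Qed.

Lemma geom1 t : Rabs t < 1 -> PSeries (fun _ => 1) t = / (1 - t).
Proof.
  intros Ht. apply is_series_unique. apply (ser_ext (fun n => t ^ n)).
  intros; ring. now apply is_series_geom.
Qed.

Lemma PS_lna : forall n, PS_derive lna n = 1.
Proof. intros n. unfold PS_derive, lna. field. apply not_0_INR; lia. Qed.

Lemma ln_PS w : Rabs w < 1 -> PSeries lna w = - ln (1 - w).
Proof.
  intros Hw.
  set (f := fun t => PSeries lna t + ln (1 - t)).
  assert (Hd : forall c, Rabs (c - 0) <= Rabs w -> is_derive f c 0).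
  { intros c Hc. rewrite Rminus_0_r in Hc.
    assert (Hc1 : Rabs c < 1) by lra.
    assert (Hpos : 0 < 1 - c) by (apply Rabs_def2 in Hc1; lra).
    unfold f. replace 0 with (PSeries (PS_derive lna) c + (-1) * / (1 - c)).
    apply (is_derive_plus (K:=R_AbsRing) (V:=R_NormedModule) (PSeries lna) (fun t => ln (1-t))). now apply is_derive_PSeries, lna_rad.
    auto_derive. lra. field. lra.
    rewrite (PSeries_ext _ (fun _ => 1)) by apply PS_lna. rewrite geom1 by auto. field. lra. }
  destruct (MVT_cor4 f (fun _ => 0) 0 (Rabs w) Hd w) as [c [Hc _]].
  rewrite Rminus_0_r; lra.
  revert Hc. unfold f. rewrite PSeries_0. simpl lna. rewrite Rminus_0_r, ln_1. intros Hc. lra.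
Qed.

Lemma lna_ser w : Rabs w < 1 -> iser (fun n => lna n * w ^ n) (- ln (1 - w)).
Proof.
  intros Hw. rewrite <- ln_PS by auto. apply is_pseries_R.
  apply PSeries_correct. now apply CV_radius_inside, lna_rad.
Qed.

Definition Gs (w : R) (m : nat) : R := w * w ^ m / INR (S m).
Definition Fs (w : R) (m : nat) : R := w ^ 2 * w ^ m / INR (S (S m)).
Definition Es (w : R) (m : nat) : R := w ^ 2 * w ^ m.
Definition Hn (m : nat) : R := sum_f_R0 (fun i => / INR (S i)) m.
Definition Hs (w : R) (m : nat) : R := Hn m * (w ^ 2 * w ^ m) / INR (S (S m)).

Lemma G_ser w : Rabs w < 1 -> iser (Gs w) (- ln (1 - w)).
Proof.
  intros Hw. pose proof (ser_shift1 _ _ (lna_ser w Hw)) as H.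
  cbv beta in H. replace (- ln (1 - w) - lna 0 * w ^ 0) with (- ln (1-w)) in H by (simpl; ring).
  revert H. apply ser_ext. intros n. change (lna (S n)) with (/ INR (S n)).
  unfold Gs. simpl pow. field. apply not_0_INR; lia.
Qed.

Lemma F_ser w : Rabs w < 1 -> iser (Fs w) (- ln (1 - w) - w).
Proof.
  intros Hw. pose proof (ser_shift1 _ _ (G_ser w Hw)) as H.
  revert H. unfold Gs. simpl INR at 2. replace (w * w ^ 0 / 1) with w by (simpl; field).
  apply ser_ext. intros n. unfold Fs. simpl pow. field. apply not_0_INR; lia.
Qed.

Lemma E_ser w : Rabs w < 1 -> iser (Es w) (w ^ 2 * / (1 - w)).
Proof.
  intros Hw. apply ser_scal. now apply is_series_geom.
Qed.

Lemma sum_rev (f : nat -> R) n : sum_f_R0 (fun k => f (n - k)%nat) n = sum_f_R0 f n.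
Proof.
  induction n as [|n IH]. reflexivity.
  rewrite decomp_sum by lia. simpl pred. rewrite tech5.
  rewrite (sum_eq (fun i => f (S n - S i)%nat) (fun i => f (n - i)%nat)) by (intros; reflexivity).
  rewrite IH. rewrite Nat.sub_0_r. ring.
Qed.

Lemma harm n : sum_f_R0 (fun k => / INR (S k) * / INR (S (n - k))) n
   = 2 * Hn n / INR (S (S n)).
Proof.
  rewrite (sum_eq _ (fun k => (/ INR (S k) + / INR (S (n - k))) * / INR (S (S n)))).
  - rewrite <- scal_sum, plus_sum.
    rewrite (sum_rev (fun k => / INR (S k))). unfold Hn. field. apply not_0_INR; lia.
  - intros i Hi. assert (E : INR (S (S n)) = INR (S i) + INR (S (n - i))).
    { rewrite <- plus_INR. f_equal. lia. }
    assert (0 < INR (S i)) by (apply lt_0_INR; lia). assert (0 < INR (S (n-i))) by (apply lt_0_INR; lia).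
    rewrite E. field. lra.
Qed.

Lemma H_ser w : Rabs w < 1 -> iser (Hs w) (ln (1 - w) ^ 2 / 2).
Proof.
  intros Hw.
  assert (HA : ex_series (fun n => Rabs (Gs w n))).
  { pose proof (CV_disk_inside lna w (lna_rad w Hw)) as H.
    apply (ex_series_incr_1 (K:=R_AbsRing) (V:=R_NormedModule)) in H.
    revert H. apply ex_series_ext. intros n. change (lna (S n)) with (/ INR (S n)).
    unfold Gs. f_equal. simpl pow. field. apply not_0_INR; lia. }
  pose proof (is_series_mult _ _ _ _ (G_ser w Hw) (G_ser w Hw) HA HA) as H.
  replace (ln (1 - w) ^ 2 / 2) with (/2 * (- ln (1 - w) * - ln (1 - w))) by (simpl; field).
  apply (ser_scal (/2)) in H. revert H. apply ser_ext. intros n.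
  rewrite (sum_eq _ (fun k => (/ INR (S k) * / INR (S (n - k))) * (w ^ 2 * w ^ n))).
  - rewrite <- scal_sum, harm. unfold Hs. field. apply not_0_INR; lia.
  - intros i Hi. unfold Gs. assert (E : w ^ n = w ^ i * w ^ (n - i)) by (rewrite <- pow_add; f_equal; lia).
    rewrite E. field. split; apply not_0_INR; lia.
Qed.

Lemma ser_minus (a b : nat -> R) (la lb : R) : iser a la -> iser b lb ->
  iser (fun n => a n - b n) (la - lb).
Proof.
  intros Ha Hb. apply (ser_scal (-1)) in Hb.
  pose proof (ser_plus _ _ _ _ Ha Hb) as H. revert H.
  replace (la + -1 * lb) with (la - lb) by ring. apply ser_ext. intros; ring.
Qed.

Lemma shift2 (u : nat -> R) (l : R) : u O = 0 -> u 1%nat = 0 ->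
  iser (fun m => u (S (S m))) l -> infinite_sum u l.
Proof.
  intros H0 H1 H. apply is_series_Reals.
  apply (is_series_decr_1 (K:=R_AbsRing) (V:=R_NormedModule)).
  apply (is_series_decr_1 (K:=R_AbsRing) (V:=R_NormedModule)).
  match goal with |- is_series _ ?L => replace L with l end. exact H.
  assert (E : l = l + - u O + - u 1%nat) by (rewrite H0, H1; ring). exact E.
Qed.

Close Scope R_scope.

Require Import Defs.
From Stdlib Require Import Reals.
From mathcomp Require Import all_boot zify.
Set Implicit Arguments. Unset Strict Implicit. Unset Printing Implicit Defensive.

Fixpoint invs (n : nat) : seq (seq nat) :=
  match n with
  | 0 => [:: [::]]
  | n'.+1 => [seq rcons s v | s <- invs n', v <- iota 1 n'.+1]
  end.

Lemma invsS n : invs n.+1 = [seq rcons s v | s <- invs n, v <- iota 1 n.+1].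
Proof. by []. Qed.

Definition valid n (s : seq nat) :=
  (size s == n) && all (fun i => (0 < nth 0 s i) && (nth 0 s i <= i.+1)) (iota 0 n).

Lemma valid_rcons n s v : valid n.+1 (rcons s v) = [&& valid n s, 0 < v & v <= n.+1].
Proof.
rewrite /valid size_rcons eqSS; case: eqP => [Hs|] //.
rewrite -[n.+1]addn1 iotaD all_cat add0n /= !nth_rcons Hs ltnn eqxx andbT addn1.
have -> : all (fun i => (0 < nth 0 (rcons s v) i) && (nth 0 (rcons s v) i <= i.+1)) (iota 0 n)
   = all (fun i => (0 < nth 0 s i) && (nth 0 s i <= i.+1)) (iota 0 n).
  apply: eq_in_all => i; rewrite mem_iota add0n => /andP [_ Hi].
  by rewrite nth_rcons Hs Hi.
by [].
Qed.

Lemma mem_invs n s : (s \in invs n) = valid n s.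
Proof.
elim: n s => [|n IH] s.
  by rewrite inE /valid /= andbT size_eq0.
case/lastP: s => [|s v].
  have -> : valid n.+1 [::] = false by []. rewrite invsS. apply/negbTE/allpairsP => [[[s' v'] [_ _ /= E]]].
  by move/(congr1 size): E; rewrite size_rcons.
rewrite valid_rcons -IH. apply/allpairsP/idP.
  case=> [[s' v'] [Hs' Hv' /= E]]. case: (rcons_inj E) => -> ->.
  by move: Hv'; rewrite Hs' mem_iota add1n ltnS.
case/and3P => Hs Hv1 Hv2. exists (s, v); split => //.
by rewrite mem_iota add1n ltnS Hv1 Hv2.
Qed.

Lemma uniq_invs n : uniq (invs n).
Proof.
elim: n => [|n IH] //. rewrite invsS. apply: allpairs_uniq => //.
  exact: iota_uniq.
by move=> [s1 v1] [s2 v2] _ _ /= /rcons_inj [-> ->].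
Qed.

Lemma size_invs n : size (invs n) = n`!.
Proof. elim: n => [|n IH] //. by rewrite invsS size_allpairs IH size_iota factS mulnC. Qed.

Lemma letters_inj n : injective (@letters n).
Proof. by move=> r1 r2 /(inj_map val_inj) /val_inj. Qed.

Lemma mem_letters n s :
  (s \in [seq letters r | r <- [seq r <- index_enum (word n) | is_invseq r]]) = valid n s.
Proof.
apply/mapP/idP.
  case=> r; rewrite mem_filter => /andP [Hr _] ->.
  rewrite /valid /letters size_map size_tuple eqxx /=.
  apply/allP => i; rewrite mem_iota add0n => /andP [_ Hi].
  rewrite (nth_map ord0) ?size_tuple //.
  have := forallP Hr (Ordinal Hi). by rewrite (tnth_nth ord0).
move=> Hv. have [/eqP Hs Hall] := andP Hv.
have Hb : forall i, i < n -> (0 < nth 0 s i) && (nth 0 s i <= i.+1).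
  by move=> i Hi; apply: (allP Hall); rewrite mem_iota add0n.
exists [tuple (inord (nth 0 s i) : 'I_n.+1) | i < n].
  rewrite mem_filter mem_index_enum andbT. apply/forallP => i.
  rewrite tnth_mktuple inordK; first exact: Hb.
  have /andP [_ H] := Hb i (ltn_ord i). by apply: leq_ltn_trans H _; rewrite ltnS.
apply: (@eq_from_nth _ 0).
  by rewrite /letters size_map size_tuple.
move=> i; rewrite Hs => Hi.
rewrite /letters (nth_map ord0) ?size_tuple //.
rewrite -[i]/(nat_of_ord (Ordinal Hi)) -tnth_nth tnth_mktuple /= inordK //.
have /andP [_ H] := Hb i Hi. by apply: leq_ltn_trans H _; rewrite ltnS.
Qed.

Lemma sum_words n (P : pred (seq nat)) (F : seq nat -> nat) :
  \sum_(r : word n | is_invseq r && P (letters r)) F (letters r)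
  = \sum_(s <- invs n | P s) F s.
Proof.
rewrite -(big_filter_cond _ (@is_invseq n) (fun r => P (letters r))).
rewrite -(big_map (@letters n) P F).
apply: perm_big. apply: uniq_perm.
- rewrite map_inj_uniq ?filter_uniq ?index_enum_uniq //. exact: letters_inj.
- exact: uniq_invs.
- by move=> s; rewrite mem_letters mem_invs.
Qed.

Lemma count_pos_rcons P s v : s != [::] ->
  count_pos P (rcons s v) = count_pos P s + P (last 0 s) v.
Proof.
move=> Hs. rewrite /count_pos size_rcons /=.
have Hk : size s = (size s).-1.+1 by rewrite prednK // lt0n size_eq0.
set k := (size s).-1 in Hk *.
rewrite {1}Hk -addn1 iotaD count_cat /= add0n addn0. congr (_ + _).
  apply: eq_in_count => i; rewrite mem_iota add0n => /andP [_ Hi].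
  by rewrite !nth_rcons Hk ltnS (ltnW Hi) ltnS Hi.
by rewrite !nth_rcons Hk ltnSn ltnn eqxx -nth_last Hk.
Qed.

Lemma count_pos_small P s : size s <= 1 -> count_pos P s = 0.
Proof. by case: s => [|a [|b s]]. Qed.

Definition A (P : nat -> nat -> bool) n := \sum_(s <- invs n) count_pos P s.
Definition c (P : nat -> nat -> bool) k j := \sum_(u <- iota 1 k) (P u j : nat).

Lemma total_eq P n j :
  Defs.total (count_pos P) n j = \sum_(s <- invs n | last 0 s == j) count_pos P s.
Proof. exact: (sum_words n (fun s => last 0 s == j) (count_pos P)). Qed.

Lemma sum_last (P : nat -> nat -> bool) m j : \sum_(s <- invs m.+1) (P (last 0 s) j : nat) = m`! * c P m.+1 j.
Proof.
rewrite invsS big_allpairs_dep /=.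
under eq_bigr do under eq_bigr do rewrite last_rcons.
by rewrite big_const_seq count_predT size_invs iter_addn_0 mulnC.
Qed.

Lemma nonempty_invs n s : s \in invs n.+1 -> s != [::].
Proof. rewrite mem_invs => /andP [/eqP Hs _]. by rewrite -size_eq0 Hs. Qed.

Lemma total_rec P m j : 0 < j <= m.+2 ->
  Defs.total (count_pos P) m.+2 j = A P m.+1 + m`! * c P m.+1 j.
Proof.
move=> Hj. rewrite total_eq big_mkcond invsS big_allpairs_dep /=.
rewrite (eq_big_seq (fun s => count_pos P s + P (last 0 s) j)).
  by rewrite big_split /= sum_last.
move=> s Hs. rewrite -big_mkcond /=.
under eq_bigl do rewrite last_rcons.
rewrite -big_filter.
have -> : [seq v <- iota 1 m.+2 | v == j] = [:: j].
  by apply: filter_pred1_uniq; rewrite ?iota_uniq // mem_iota add1n ltnS.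
by rewrite big_seq1 count_pos_rcons // (nonempty_invs Hs).
Qed.

Lemma A_rec P m : A P m.+2 = m.+2 * A P m.+1 + m`! * \sum_(v <- iota 1 m.+2) c P m.+1 v.
Proof.
rewrite /A invsS big_allpairs_dep.
rewrite (eq_big_seq (fun s => \sum_(v <- iota 1 m.+2) (count_pos P s + P (last 0 s) v))); last first.
  move=> s Hs. apply: eq_bigr => v _. by rewrite count_pos_rcons // (nonempty_invs Hs).
under eq_bigr do rewrite big_split. rewrite big_split. congr addn.
  rewrite big_distrr. apply: eq_bigr => s _.
  by rewrite big_const_seq count_predT size_iota iter_addn_0 mulnC.
rewrite exchange_big big_distrr. apply: eq_bigr => v _. exact: sum_last.
Qed.

Lemma A1 P : A P 1 = 0.
Proof. by rewrite /A /= big_seq1. Qed.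

Lemma total1 P j : Defs.total (count_pos P) 1 j = 0.
Proof.
rewrite total_eq. apply: big1_seq => s /andP [_ Hs].
apply: count_pos_small. by move: Hs; rewrite mem_invs => /andP [/eqP -> _].
Qed.

Lemma c_S P k j : c P k.+1 j = c P k j + P k.+1 j.
Proof. by rewrite /c -[k.+1]addn1 iotaD big_cat big_seq1 add1n addn1. Qed.

Lemma c_lev k j : 0 < j -> c (fun a b => a == b) k j = (j <= k).
Proof. move=> Hj; elim: k => [|k IH]; first by rewrite /c big_nil; lia. rewrite c_S IH /=. lia. Qed.

Lemma c_des k j : c (fun a b => (b < a)%N) k j = k - j.
Proof. elim: k => [|k IH]; first by rewrite /c big_nil. rewrite c_S IH /=; lia. Qed.

Lemma c_asc k j : 0 < j -> c (fun a b => (a < b)%N) k j = minn j.-1 k.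
Proof. move=> Hj; elim: k => [|k IH]; first by rewrite /c big_nil; lia. rewrite c_S IH /=; lia. Qed.

Local Open Scope R_scope.

Lemma INR_sum_iota (f : nat -> nat) k :
  INR (\sum_(v <- iota 1 k.+1) f v)%N = sum_f_R0 (fun i => INR (f i.+1)) k.
Proof.
elim: k => [|k IH]; first by rewrite big_seq1.
rewrite -[k.+2]addn1 iotaD big_cat big_seq1 plus_INR IH tech5 add1n. done.
Qed.

Lemma sum_INR_id n : sum_f_R0 (fun i => INR i) n = INR n * (INR n + 1) / 2.
Proof.
elim: n => [|n IH]; first by simpl; field.
rewrite tech5 IH S_INR. field.
Qed.

Definition Yr (y : R) n := sum_f_R0 (fun k => y ^ k.+1) n.

Lemma Yr_cf y n : y <> 1 -> Yr y n = y * (1 - y * y ^ n) / (1 - y).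
Proof.
move=> Hy. have Hy' : 1 - y <> 0 by lra.
rewrite /Yr. elim: n => [|n IH]; first by simpl; field.
rewrite tech5 IH /=. field. done.
Qed.

Lemma Dsum_cf y m : y <> 1 ->
  sum_f_R0 (fun k => INR (m - k) * y ^ k.+1) m
  = (INR m + 1 - (INR m + 2) * y + y ^ 2 * y ^ m) / (1 - y) ^ 2 - (INR m + 1).
Proof.
move=> Hy. have Hy' : 1 - y <> 0 by lra.
elim: m => [|m IH]; first by simpl; field.
rewrite tech5 subnn.
have -> : sum_f_R0 (fun k => INR (m.+1 - k) * y ^ k.+1) m
   = sum_f_R0 (fun k => INR (m - k) * y ^ k.+1 + y ^ k.+1) m.
  apply: PartSum.sum_eq => k /leP Hk. have -> : (m.+1 - k = (m - k).+1)%N by lia.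
  rewrite S_INR. ring.
rewrite plus_sum IH -/(Yr y m) Yr_cf // S_INR. simpl. field. done.
Qed.

Lemma Usum_cf y n : y <> 1 ->
  sum_f_R0 (fun k => INR k * y ^ k.+1) n
  = y ^ 2 * (1 - (INR n + 1) * y ^ n + INR n * y * y ^ n) / (1 - y) ^ 2.
Proof.
move=> Hy. have Hy' : 1 - y <> 0 by lra.
elim: n => [|n IH]; first by simpl; field.
rewrite tech5 IH S_INR /=. field. done.
Qed.

Lemma egf_termS T x y n :
  egf_term T x y n.+1 = sum_f_R0 (fun k => INR (T n.+1 k.+1) * y ^ k.+1) n * x ^ n.+1 / INR (n.+1)`!.
Proof. by []. Qed.

Lemma egf_gen P x y m :
  egf_term (Defs.total (count_pos P)) x y m.+2
  = x ^ m.+2 / INR (m.+2)`! * (INR (A P m.+1) * Yr y m.+1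
      + INR (m`!) * sum_f_R0 (fun k => INR (c P m.+1 k.+1) * y ^ k.+1) m.+1).
Proof.
rewrite egf_termS.
have -> : sum_f_R0 (fun k => INR (Defs.total (count_pos P) m.+2 k.+1) * y ^ k.+1) m.+1
  = sum_f_R0 (fun k => y ^ k.+1 * INR (A P m.+1) + (INR (c P m.+1 k.+1) * y ^ k.+1) * INR (m`!)) m.+1.
  apply: PartSum.sum_eq => k /leP Hk. rewrite total_rec; last by apply/andP; split => //; lia.
  rewrite plus_INR mult_INR. ring.
rewrite plus_sum -!scal_sum /Yr. field. apply: not_0_INR; apply/eqP. by rewrite -lt0n fact_gt0.
Qed.

Lemma egf0 T x y : egf_term T x y 0 = 0.
Proof. by []. Qed.

Lemma egf1 P x y : egf_term (Defs.total (count_pos P)) x y 1 = 0.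
Proof. rewrite egf_termS /= total1 /=. by rewrite /Rdiv !Rmult_0_l. Qed.

Lemma fact_INR m : INR (m.+1)`! = (INR m + 1) * INR (m`!).
Proof. by rewrite factS mult_INR S_INR. Qed.

Lemma HnS m : Hn m.+1 = Hn m + / (INR m + 2).
Proof. rewrite /Hn tech5 !S_INR. congr (_ + / _). ring. Qed.

Lemma sumc_lev m : INR (\sum_(v <- iota 1 m.+2) c (fun a b => a == b) m.+1 v)%N = INR m + 1.
Proof.
rewrite (eq_big_seq (fun v => (v <= m.+1 : nat))); last first.
  by move=> v; rewrite mem_iota => /andP [Hv _]; rewrite c_lev.
rewrite INR_sum_iota tech5 ltnn /= Rplus_0_r.
rewrite (PartSum.sum_eq _ (fun _ => 1)); last first.
  by move=> i /leP Hi; rewrite ltnS; have -> : (i <= m)%N by lia.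
by rewrite sum_cte S_INR; ring.
Qed.

Lemma sumc_des m : INR (\sum_(v <- iota 1 m.+2) c (fun a b => (b < a)%N) m.+1 v)%N = INR m * (INR m + 1) / 2.
Proof.
rewrite (eq_big_seq (fun v => m.+1 - v)%N); last by move=> v _; rewrite c_des.
rewrite INR_sum_iota tech5.
have -> : (m.+1 - m.+2 = 0)%N by lia.
rewrite [INR 0]/= Rplus_0_r -sum_INR_id -(sum_rev (fun i => INR i) m).
by apply: PartSum.sum_eq => i _; rewrite subSS.
Qed.

Lemma sumc_asc m : INR (\sum_(v <- iota 1 m.+2) c (fun a b => (a < b)%N) m.+1 v)%N = (INR m + 1) * (INR m + 2) / 2.
Proof.
rewrite (eq_big_seq (fun v => minn v.-1 m.+1)); last first.
  by move=> v; rewrite mem_iota => /andP [Hv _]; rewrite c_asc.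
rewrite INR_sum_iota.
rewrite (PartSum.sum_eq _ (fun i => INR i)); last first.
  by move=> i /leP Hi /=; have -> : minn i m.+1 = i by lia.
rewrite sum_INR_id !S_INR. field.
Qed.

Lemma A_lev m : INR (A (fun a b => a == b) m.+1) = INR (m.+1)`! * (Hn m - 1).
Proof.
elim: m => [|m IH]; first by rewrite A1 /Hn /=; field.
rewrite A_rec plus_INR (mult_INR m.+2) (mult_INR m`!) sumc_lev IH HnS (fact_INR m.+1) (fact_INR m) !S_INR.
have := pos_INR m => Hm. field. lra.
Qed.

Lemma A_des m : INR (A (fun a b => (b < a)%N) m.+1) = INR (m.+1)`! * ((INR m + 2) / 2 - Hn m).
Proof.
elim: m => [|m IH]; first by rewrite A1 /Hn /=; field.
rewrite A_rec plus_INR (mult_INR m.+2) (mult_INR m`!) sumc_des IH HnS (fact_INR m.+1) (fact_INR m) !S_INR.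
have := pos_INR m => Hm. field. lra.
Qed.

Lemma A_asc m : INR (A (fun a b => (a < b)%N) m.+1) = INR (m.+1)`! * (INR m / 2).
Proof.
elim: m => [|m IH]; first by rewrite A1 /=; field.
rewrite A_rec plus_INR (mult_INR m.+2) (mult_INR m`!) sumc_asc IH (fact_INR m.+1) (fact_INR m) !S_INR.
field.
Qed.

Lemma W_lev y m : sum_f_R0 (fun k => INR (c (fun a b => a == b) m.+1 k.+1) * y ^ k.+1) m.+1 = Yr y m.
Proof.
rewrite tech5 c_lev // ltnn [INR 0]/= Rmult_0_l Rplus_0_r /Yr.
apply: PartSum.sum_eq => k /leP Hk. rewrite c_lev // ltnS.
have -> : (k <= m)%N by lia. by rewrite [INR 1]/= Rmult_1_l.
Qed.

Lemma W_des y m : sum_f_R0 (fun k => INR (c (fun a b => (b < a)%N) m.+1 k.+1) * y ^ k.+1) m.+1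
   = sum_f_R0 (fun k => INR (m - k) * y ^ k.+1) m.
Proof.
rewrite tech5 c_des.
have -> : (m.+1 - m.+2 = 0)%N by lia.
rewrite [INR 0]/= Rmult_0_l Rplus_0_r.
by apply: PartSum.sum_eq => k _; rewrite c_des subSS.
Qed.

Lemma W_asc y m : sum_f_R0 (fun k => INR (c (fun a b => (a < b)%N) m.+1 k.+1) * y ^ k.+1) m.+1
   = sum_f_R0 (fun k => INR k * y ^ k.+1) m.+1.
Proof.
apply: PartSum.sum_eq => k /leP Hk. rewrite c_asc //=.
by have -> : minn k m.+1 = k by lia.
Qed.

Lemma fact_nz m : INR (m`!) <> 0.
Proof. apply: not_0_INR; apply/eqP. by rewrite -lt0n fact_gt0. Qed.

Lemma term_lev x y m : y <> 1 ->
  egf_term Ltot x y m.+2 =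
    y / (1 - y) * (Hs x m - Hs (x * y) m) - y / (1 - y) * (Fs x m - Fs (x * y) m)
    + y / (1 - y) * (x * Gs x m - Fs x m) - 1 / (1 - y) * ((x * y) * Gs (x * y) m - Fs (x * y) m).
Proof.
move=> Hy. have Hy' : 1 - y <> 0 by lra.
have Hm := pos_INR m. have Hf := @fact_nz m.
rewrite /Ltot /nlevels egf_gen A_lev W_lev !Yr_cf // (fact_INR m.+1) (fact_INR m).
rewrite /Hs /Fs /Gs !Rpow_mult_distr -!tech_pow_Rmult !S_INR.
field. repeat split; lra.
Qed.

Lemma term_des x y m : y <> 1 ->
  egf_term Dtot x y m.+2 =
    y / (2 * (1 - y)) * (Es x m - Es (x * y) m) - y / (1 - y) * (Hs x m - Hs (x * y) m)
    + (1 / (1 - y) ^ 2 - 1) * Fs x m - x * y / (1 - y) ^ 2 * Gs x m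
    + ((x * y) * Gs (x * y) m - Fs (x * y) m) / (1 - y) ^ 2.
Proof.
move=> Hy. have Hy' : 1 - y <> 0 by lra.
have Hm := pos_INR m. have Hf := @fact_nz m.
rewrite /Dtot /ndescents egf_gen A_des W_des Dsum_cf // !Yr_cf // (fact_INR m.+1) (fact_INR m).
rewrite /Hs /Fs /Gs /Es !Rpow_mult_distr -!tech_pow_Rmult !S_INR.
field. repeat split; lra.
Qed.

Lemma term_asc x y m : y <> 1 ->
  egf_term Utot x y m.+2 =
    y / (2 * (1 - y)) * (Es x m - Es (x * y) m) - y / (1 - y) * (Fs x m - Fs (x * y) m)
    + y ^ 2 / (1 - y) ^ 2 * (x * Gs x m - Fs x m - x * Gs (x * y) m + Fs (x * y) m).
Proof.
move=> Hy. have Hy' : 1 - y <> 0 by lra.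
have Hm := pos_INR m. have Hf := @fact_nz m.
rewrite /Utot /nascents egf_gen A_asc W_asc Usum_cf // !Yr_cf // (fact_INR m.+1) (fact_INR m).
rewrite /Hs /Fs /Gs /Es !Rpow_mult_distr -!tech_pow_Rmult !S_INR.
field. repeat split; lra.
Qed.

Arguments ser_plus {a b la lb}.
Arguments ser_minus {a b la lb}.
Arguments ser_scal c {a l}.
Arguments H_ser {w}.
Arguments F_ser {w}.
Arguments G_ser {w}.
Arguments E_ser {w}.

Lemma iser_lim (a b : nat -> R) (l l' : R) : iser a l -> l = l' -> (forall n, a n = b n) -> iser b l'.
Proof. move=> H <- E. exact: ser_ext E H. Qed.

Theorem theorem3p4 (x y : R) (hx : Rabs x < 1) (hy : Rabs y < 1) :
  infinite_sum (egf_term Ltot x y)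
    (x * y + (2 * (x * y - y - 1) * ln (1 - x * y) - 2 * y * (x - 2) * ln (1 - x)
              - y * (ln (1 - x * y) ^ 2 - ln (1 - x) ^ 2)) / (2 * (1 - y)))
  /\
  infinite_sum (egf_term Dtot x y)
    (x * y / (2 * (1 - y)) * ((3 * x - 2) / (1 - x) - x * y ^ 2 / (1 - x * y))
     + ((1 - x * y) * ln (1 - x * y) - y * (2 - x - y) * ln (1 - x)) / (1 - y) ^ 2
     + y * (ln (1 - x * y) ^ 2 - ln (1 - x) ^ 2) / (2 * (1 - y)))
  /\
  infinite_sum (egf_term Utot x y)
    (x * y / (2 * (1 - y)) * ((2 - x) / (1 - x) - x * y ^ 2 / (1 - x * y))
     + y * (1 - x * y) / (1 - y) ^ 2 * ln ((1 - x) / (1 - x * y))).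
Proof.
have Hz : Rabs (x * y) < 1.
  rewrite Rabs_mult. have := Rabs_pos x. have := Rabs_pos y. nra.
have Hy1 : y <> 1 by move: hy => /Rabs_def2; lra.
have Hy' : 1 - y <> 0 by lra.
have Hx' : 0 < 1 - x by move: hx => /Rabs_def2; lra.
have Hz' : 0 < 1 - x * y by move: Hz => /Rabs_def2; lra.
split; [|split].
- apply: shift2; [exact: egf0 | exact: (egf1 (fun a b => a == b)) |].
  have S := ser_minus (ser_plus (ser_minus (ser_scal (y/(1-y)) (ser_minus (H_ser hx) (H_ser Hz)))
       (ser_scal (y/(1-y)) (ser_minus (F_ser hx) (F_ser Hz))))
       (ser_scal (y/(1-y)) (ser_minus (ser_scal x (G_ser hx)) (F_ser hx))))
       (ser_scal (1/(1-y)) (ser_minus (ser_scal (x*y) (G_ser Hz)) (F_ser Hz))).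
  apply: (iser_lim S); last by move=> m; rewrite term_lev.
  field. done.
- apply: shift2; [exact: egf0 | exact: (egf1 (fun a b => (b < a)%N)) |].
  have S := ser_plus (ser_minus (ser_plus (ser_minus (ser_scal (y/(2*(1-y))) (ser_minus (E_ser hx) (E_ser Hz)))
       (ser_scal (y/(1-y)) (ser_minus (H_ser hx) (H_ser Hz))))
       (ser_scal (1/(1-y)^2 - 1) (F_ser hx)))
       (ser_scal (x*y/(1-y)^2) (G_ser hx)))
       (ser_scal (/(1-y)^2) (ser_minus (ser_scal (x*y) (G_ser Hz)) (F_ser Hz))).
  apply: (iser_lim S); last first.
    move=> m; rewrite term_des //. rewrite /Rdiv. ring.
  field. split; lra.
- apply: shift2; [exact: egf0 | exact: (egf1 (fun a b => (a < b)%N)) |].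
  have S := ser_plus (ser_minus (ser_scal (y/(2*(1-y))) (ser_minus (E_ser hx) (E_ser Hz)))
       (ser_scal (y/(1-y)) (ser_minus (F_ser hx) (F_ser Hz))))
       (ser_scal (y^2/(1-y)^2) (ser_plus (ser_minus (ser_minus (ser_scal x (G_ser hx)) (F_ser hx))
            (ser_scal x (G_ser Hz))) (F_ser Hz))).
  apply: (iser_lim S); last by move=> m; rewrite term_asc.
  rewrite ln_div //. field. split; lra.
Qed.
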